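(* Let $A,K$ be associative algebras and $\xi:A\to\mathrm{Out}(K)$ a coupling admitting a bimultiplication law covering it. Then the $A$-kernel $(K,\xi)$ is extendible if and only if $\mathrm{Obs}(\xi)=0$ in $HH^3(A,\mathrm{Anni}K)$.
   Context: All algebras are associative, not necessarily unital, over a field $\mathbb F$. For an algebra $K$, a bimultiplication of $K$ is a pair $(u,v)$ of linear maps $K\to K$ with $k_1u(k_2)=v(k_1)k_2$, $u(k_1k_2)=u(k_1)k_2$, $v(k_1k_2)=k_1v(k_2)$; these form an algebra $\mathrm{Mul}(K)$ with product $(u_1,v_1)(u_2,v_2)=(u_1\circ u_2,\ v_2\circ v_1)$. $\epsilon:K\to\mathrm{Mul}(K)$, $\epsilon(k_0)=(k\mapsto k_0k,\ k\mapsto kk_0)$; $\mathrm{Inn}(K)=\epsilon(K)$, $\mathrm{Out}(K)=\mathrm{Mul}(K)/\mathrm{Inn}(K)$ with projection $\natural$; $\mathrm{Anni}K=\{k: kK=0=Kk\}$. A coupling is an algebra homomorphism $\xi:A\to\mathrm{Out}(K)$; $(K,\xi)$ is called an $A$-kernel. A bimultiplication law covering $\xi$ is a linear map $\mu:A\to\mathrm{Mul}(K)$, $\mu(a)=(u_a,v_a)$, with $\natural\circ\mu=\xi$ and $u_av_b=v_bu_a$ for all $a,b\in A$; $\mathrm{Anni}K$ is then an $A$-bimodule via $a\cdot n=u_a(n)$, $n\cdot a=v_a(n)$, independent of $\mu$. Curvature $R^\mu(a_1,a_2)=\mu(a_1)\mu(a_2)-\mu(a_1a_2)\in\mathrm{Inn}(K)$;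 a hindrance is a bilinear $h:A\times A\to K$ with $\epsilon\circ h=R^\mu$; $f(\mu,h)(a_1,a_2,a_3)=u_{a_1}h(a_2,a_3)-h(a_1a_2,a_3)+h(a_1,a_2a_3)-v_{a_3}h(a_1,a_2)$ is a Hochschild 3-cocycle with values in $\mathrm{Anni}K$ whose class $\mathrm{Obs}(\xi)\in HH^3(A,\mathrm{Anni}K)$ is independent of $\mu,h$. The kernel $(K,\xi)$ is extendible if there is an algebra $B$ containing $K$ as a two-sided ideal and a surjective algebra homomorphism $\beta:B\to A$ with kernel $K$ such that for a linear section $\gamma$ of $\beta$, $\xi(a)=\natural\big(k\mapsto\gamma(a)k,\ k\mapsto k\gamma(a)\big)$ for all $a\in A$. *)

(* Defs.v *)
From HB Require Import structures.
From mathcomp Require Import all_boot all_order all_algebra.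
Set Implicit Arguments. Unset Strict Implicit. Unset Printing Implicit Defensive.
Import GRing.Theory.
Local Open Scope ring_scope.

Record nalg (F : fieldType) := NAlg {
  ncarrier :> lmodType F;
  nmul : ncarrier -> ncarrier -> ncarrier;
  nmulA : forall x y z, nmul x (nmul y z) = nmul (nmul x y) z;
  nmulDl : forall x y z, nmul (x + y) z = nmul x z + nmul y z;
  nmulDr : forall x y z, nmul x (y + z) = nmul x y + nmul x z;
  nmulZl : forall (c : F) x y, nmul (c *: x) y = c *: nmul x y;
  nmulZr : forall (c : F) x y, nmul x (c *: y) = c *: nmul x y
}.
Arguments nmul {F} n _ _.

Section Defs.
Variable F : fieldType.

Definition is_lin (V W : lmodType F) (f : V -> W) : Prop :=
  forall (c : F) (x y : V), f (c *: x + y) = c *: f x + f y.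

Definition is_bilin (U V W : lmodType F) (g : U -> V -> W) : Prop :=
  (forall y, is_lin (fun x => g x y)) /\ (forall x, is_lin (g x)).

Variable K : nalg F.

(* Pairs of linear maps K -> K; Mul(K) is the subset of bimultiplications. *)
Definition mpair := ((K -> K) * (K -> K))%type.

Definition is_bimult (m : mpair) : Prop :=
  [/\ is_lin m.1, is_lin m.2,
      (forall k1 k2, nmul K k1 (m.1 k2) = nmul K (m.2 k1) k2),
      (forall k1 k2, m.1 (nmul K k1 k2) = nmul K (m.1 k1) k2) &
      (forall k1 k2, m.2 (nmul K k1 k2) = nmul K k1 (m.2 k2))].

Definition padd (m1 m2 : mpair) : mpair :=
  (fun k => m1.1 k + m2.1 k, fun k => m1.2 k + m2.2 k).
Definition pscale (c : F) (m : mpair) : mpair :=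
  (fun k => c *: m.1 k, fun k => c *: m.2 k).
Definition pmul (m1 m2 : mpair) : mpair :=
  (fun k => m1.1 (m2.1 k), fun k => m2.2 (m1.2 k)).
Definition psub (m1 m2 : mpair) : mpair :=
  (fun k => m1.1 k - m2.1 k, fun k => m1.2 k - m2.2 k).

Definition eps (k0 : K) : mpair := (fun k => nmul K k0 k, fun k => nmul K k k0).

(* Equality in Out(K) = Mul(K)/Inn(K): m1 - m2 is inner. *)
Definition out_eq (m1 m2 : mpair) : Prop :=
  exists k0 : K, forall k, m1.1 k = m2.1 k + (eps k0).1 k /\
                           m1.2 k = m2.2 k + (eps k0).2 k.

Definition in_anni (n : K) : Prop :=
  forall k, nmul K n k = 0 /\ nmul K k n = 0.

Variable A : nalg F.

(* A coupling xi : A -> Out(K), given by a choice of representatives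
   xi a in Mul(K) of the classes; it is an algebra homomorphism into Out(K). *)
Definition coupling (xi : A -> mpair) : Prop :=
  [/\ (forall a, is_bimult (xi a)),
      (forall (c : F) a b, out_eq (xi (c *: a + b)) (padd (pscale c (xi a)) (xi b))) &
      (forall a b, out_eq (xi (nmul A a b)) (pmul (xi a) (xi b)))].

Definition bimult_law (xi : A -> mpair) (mu : A -> mpair) : Prop :=
  [/\ (forall a, is_bimult (mu a)),
      (forall (c : F) a b k, (mu (c *: a + b)).1 k = c *: (mu a).1 k + (mu b).1 k /\
                             (mu (c *: a + b)).2 k = c *: (mu a).2 k + (mu b).2 k),
      (forall a, out_eq (mu a) (xi a)) &
      (forall a b k, (mu a).1 ((mu b).2 k) = (mu b).2 ((mu a).1 k))].

Definition curvature (mu : A -> mpair) (a1 a2 : A) : mpair :=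
  psub (pmul (mu a1) (mu a2)) (mu (nmul A a1 a2)).

Definition hindrance (mu : A -> mpair) (h : A -> A -> K) : Prop :=
  is_bilin h /\
  forall a1 a2 k, (eps (h a1 a2)).1 k = (curvature mu a1 a2).1 k /\
                  (eps (h a1 a2)).2 k = (curvature mu a1 a2).2 k.

(* Hochschild-type differential of a bilinear map g : A x A -> K,
   using the bimodule structure a.n = u_a n, n.a = v_a n. *)
Definition hoch_d2 (mu : A -> mpair) (g : A -> A -> K) (a1 a2 a3 : A) : K :=
  (mu a1).1 (g a2 a3) - g (nmul A a1 a2) a3 + g a1 (nmul A a2 a3)
  - (mu a3).2 (g a1 a2).

Definition obs_cocycle (mu : A -> mpair) (h : A -> A -> K) : A -> A -> A -> K :=
  hoch_d2 mu h.

Definition hoch_coboundary (mu : A -> mpair) (f : A -> A -> A -> K) : Prop :=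
  exists g : A -> A -> K,
    [/\ is_bilin g, (forall a1 a2, in_anni (g a1 a2)) &
        (forall a1 a2 a3, f a1 a2 a3 = hoch_d2 mu g a1 a2 a3)].

Definition obs_vanishes (xi : A -> mpair) : Prop :=
  forall mu h, bimult_law xi mu -> hindrance mu h ->
    hoch_coboundary mu (obs_cocycle mu h).

Definition extendible (xi : A -> mpair) : Prop :=
  exists (B : nalg F) (iota : K -> B) (beta : B -> A),
    is_lin iota /\ injective iota /\
    (forall k1 k2, iota (nmul K k1 k2) = nmul B (iota k1) (iota k2)) /\
    (forall (b : B) (k : K), exists k1 k2 : K,
         nmul B b (iota k) = iota k1 /\ nmul B (iota k) b = iota k2) /\
    is_lin beta /\
    (forall b1 b2, beta (nmul B b1 b2) = nmul A (beta b1) (beta b2)) /\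
    (forall a, exists b, beta b = a) /\
    (forall b, beta b = 0 <-> exists k, b = iota k) /\
    (exists gamma : A -> B,
       is_lin gamma /\ (forall a, beta (gamma a) = a) /\
       forall a, exists m : mpair,
         (forall k, iota (m.1 k) = nmul B (gamma a) (iota k) /\
                    iota (m.2 k) = nmul B (iota k) (gamma a)) /\
         out_eq (xi a) m).

End Defs.
Arguments mpair {F} K.

(* Main.v *)
Require Import Defs.
From mathcomp Require Import all_boot all_order all_algebra.
From mathcomp Require Import boolp classical_sets.
Import GRing.Theory.
Local Open Scope ring_scope.
Set Implicit Arguments. Unset Strict Implicit.

Section Basics.
Variable F : fieldType.

Lemma nmul0l (R : nalg F) (y : R) : nmul R 0 y = 0.
Proof. by have := (@nmulZl _ R 0 y y); rewrite !scale0r. Qed.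
Lemma nmul0r (R : nalg F) (y : R) : nmul R y 0 = 0.
Proof. by have := (@nmulZr _ R 0 y y); rewrite !scale0r. Qed.
Lemma nmulNl (R : nalg F) (x y : R) : nmul R (- x) y = - nmul R x y.
Proof. by rewrite -scaleN1r nmulZl scaleN1r. Qed.
Lemma nmulNr (R : nalg F) (x y : R) : nmul R x (- y) = - nmul R x y.
Proof. by rewrite -scaleN1r nmulZr scaleN1r. Qed.
Lemma nmulBl (R : nalg F) (x y z : R) : nmul R (x - y) z = nmul R x z - nmul R y z.
Proof. by rewrite nmulDl nmulNl. Qed.
Lemma nmulBr (R : nalg F) (x y z : R) : nmul R z (x - y) = nmul R z x - nmul R z y.
Proof. by rewrite nmulDr nmulNr. Qed.

Section Lin.
Variables (V W : lmodType F) (f : V -> W) (Hf : is_lin f).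
Lemma lin0 : f 0 = 0.
Proof. by have := Hf (-1) 0 0; rewrite scaler0 addr0 scaleN1r addNr. Qed.
Lemma linD x y : f (x + y) = f x + f y.
Proof. by have := Hf 1 x y; rewrite !scale1r. Qed.
Lemma linZ c x : f (c *: x) = c *: f x.
Proof. by have := Hf c x 0; rewrite !addr0 lin0 addr0. Qed.
Lemma linN x : f (- x) = - f x.
Proof. by rewrite -scaleN1r linZ scaleN1r. Qed.
Lemma linB x y : f (x - y) = f x - f y.
Proof. by rewrite linD linN. Qed.
End Lin.

Lemma pairDE (V W : lmodType F) (x y : V * W) : x + y = (x.1 + y.1, x.2 + y.2).
Proof. by []. Qed.
Lemma pairZE (V W : lmodType F) c (x : V * W) : c *: x = (c *: x.1, c *: x.2).
Proof. by []. Qed.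
Lemma pair0E (V W : lmodType F) : (0 : V * W) = (0, 0).
Proof. by []. Qed.

Lemma addACA4 (V : zmodType) (a1 a2 a3 a4 b1 b2 b3 b4 : V) :
  (a1 + b1) + (a2 + b2) + (a3 + b3) + (a4 + b4) = (a1 + a2 + a3 + a4) + (b1 + b2 + b3 + b4).
Proof. by rewrite (addrACA a1) (addrACA (a1 + a2)) (addrACA (a1 + a2 + a3)). Qed.

Lemma assoc_regroup (V : zmodType) (L1 L2 L3 L4 L5 L6 L7 L8 L9 L10 R1 R2 R3 R4 R5 R6 R7 R8 R9 R10 : V) :
  L1 = R1 -> L2 = R5 -> L3 = R2 -> L4 + L5 = R6 -> L6 = R3 -> L7 = R7 ->
  L8 = R9 + R4 -> L9 + L10 = R8 + R10 ->
  (L1 + L2 + L3 + L4) + L5 + (L6 + L7 + L8 + L9) + L10 =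
  (R1 + R2 + R3 + R4) + (R5 + R6 + R7 + R8) + R9 + R10.
Proof.
move=> -> -> -> <- -> -> -> E.
rewrite !addrA [LHS](ACl ((1*3*6*9*2*4*5*7*8)*(10*11)))/= E.
by rewrite [RHS](ACl ((1*2*3*4*5*6*7*8*10)*(9*11)))/=.
Qed.

End Basics.

Lemma xx0 (V : zmodType) (x : V) : x = x + x -> x = 0.
Proof. by move/(congr1 (fun y => y - x)); rewrite subrr addrK => <-. Qed.

Lemma coc_rearr (V : zmodType) (a b c d : V) : a - b + c - d = 0 -> d + b = a + c.
Proof. by move/eqP; rewrite subr_eq0 => /eqP E; rewrite -E addrAC subrK. Qed.

Section Crossed.
Variables (F : fieldType) (A K : nalg F) (xi : A -> mpair K) (mu : A -> mpair K) (h : A -> A -> K).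
Hypothesis mub : forall a, is_bimult (mu a).
Hypothesis mul : forall (c : F) a b k, (mu (c *: a + b)).1 k = c *: (mu a).1 k + (mu b).1 k /\
                             (mu (c *: a + b)).2 k = c *: (mu a).2 k + (mu b).2 k.
Hypothesis muc : forall a b k, (mu a).1 ((mu b).2 k) = (mu b).2 ((mu a).1 k).
Hypothesis hb : is_bilin h.
Hypothesis hc : forall a1 a2 k, (eps (h a1 a2)).1 k = (curvature mu a1 a2).1 k /\
                  (eps (h a1 a2)).2 k = (curvature mu a1 a2).2 k.
Hypothesis hcoc : forall a1 a2 a3, hoch_d2 mu h a1 a2 a3 = 0.
Hypothesis xim : forall a, out_eq (mu a) (xi a).

Local Notation u a := (mu a).1.
Local Notation v a := (mu a).2.

Let uL a : is_lin (u a). Proof. by case: (mub a). Qed.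
Let vL a : is_lin (v a). Proof. by case: (mub a). Qed.
Let uD a x y : u a (x + y) = u a x + u a y. Proof. exact: linD. Qed.
Let vD a x y : v a (x + y) = v a x + v a y. Proof. exact: linD. Qed.
Let uZ a c x : u a (c *: x) = c *: u a x. Proof. exact: linZ. Qed.
Let vZ a c x : v a (c *: x) = c *: v a x. Proof. exact: linZ. Qed.
Let u0 a : u a 0 = 0. Proof. exact: lin0. Qed.
Let v0 a : v a 0 = 0. Proof. exact: lin0. Qed.
Let uA0 k : u 0 k = 0.
Proof. by have := (mul 1 0 0 k).1; rewrite !scale1r addr0; exact: xx0. Qed.
Let vA0 k : v 0 k = 0.
Proof. by have := (mul 1 0 0 k).2; rewrite !scale1r addr0; exact: xx0. Qed.
Let uAD a b k : u (a + b) k = u a k + u b k.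
Proof. by have := (mul 1 a b k).1; rewrite !scale1r. Qed.
Let vAD a b k : v (a + b) k = v a k + v b k.
Proof. by have := (mul 1 a b k).2; rewrite !scale1r. Qed.
Let uAZ c a k : u (c *: a) k = c *: u a k.
Proof. by have := (mul c a 0 k).1; rewrite !addr0 uA0 addr0. Qed.
Let vAZ c a k : v (c *: a) k = c *: v a k.
Proof. by have := (mul c a 0 k).2; rewrite !addr0 vA0 addr0. Qed.
Let hD1 a b c : h (a + b) c = h a c + h b c. Proof. exact (linD (hb.1 c) a b). Qed.
Let hD2 a b c : h c (a + b) = h c a + h c b. Proof. exact (linD (hb.2 c) a b). Qed.
Let hZ1 x a b : h (x *: a) b = x *: h a b. Proof. exact (linZ (hb.1 b) x a). Qed.
Let hZ2 x a b : h b (x *: a) = x *: h b a. Proof. exact (linZ (hb.2 b) x a). Qed.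
Let h01 b : h 0 b = 0. Proof. exact (lin0 (hb.1 b)). Qed.
Let h02 b : h b 0 = 0. Proof. exact (lin0 (hb.2 b)). Qed.

Definition cmul (x y : (K * A)%type) : (K * A)%type :=
  (nmul K x.1 y.1 + u x.2 y.1 + v y.2 x.1 + h x.2 y.2, nmul A x.2 y.2).

Lemma cmulA x y z : cmul x (cmul y z) = cmul (cmul x y) z.
Proof.
rewrite /cmul /=; congr pair; last exact: nmulA.
rewrite !nmulDl !nmulDr !uD !vD; symmetry.
apply: assoc_regroup.
- by rewrite nmulA.
- by case: (mub x.2) => _ _ _ -> _.
- by case: (mub y.2) => _ _ -> _ _.
- by have [/= -> _] := hc x.2 y.2 z.1; rewrite subrK.
- by case: (mub z.2) => _ _ _ _ ->.
- by rewrite muc.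
- by have [_ /= ->] := hc y.2 z.2 x.1; rewrite addrC subrK.
- by apply: coc_rearr; have := hcoc x.2 y.2 z.2; rewrite /hoch_d2.
Qed.

Lemma cmulDl x y z : cmul (x + y) z = cmul x z + cmul y z.
Proof.
rewrite /cmul !pairDE /=; congr pair; last exact: nmulDl.
by rewrite nmulDl uAD vD hD1 addACA4.
Qed.

Lemma cmulDr x y z : cmul x (y + z) = cmul x y + cmul x z.
Proof.
rewrite /cmul !pairDE /=; congr pair; last exact: nmulDr.
by rewrite nmulDr uD vAD hD2 addACA4.
Qed.

Lemma cmulZl c x y : cmul (c *: x) y = c *: cmul x y.
Proof.
rewrite /cmul !pairZE /=; congr pair; last exact: nmulZl.
by rewrite nmulZl uAZ vZ hZ1 !scalerDr.
Qed.

Lemma cmulZr c x y : cmul x (c *: y) = c *: cmul x y.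
Proof.
rewrite /cmul !pairZE /=; congr pair; last exact: nmulZr.
by rewrite nmulZr uZ vAZ hZ2 !scalerDr.
Qed.

Definition Balg : nalg F := @NAlg F (K * A)%type cmul cmulA cmulDl cmulDr cmulZl cmulZr.

Lemma crossed_extendible : extendible xi.
Proof.
exists Balg, (fun k => (k, 0)), (fun b => b.2).
split; first by move=> c x y; rewrite /= pairZE pairDE /= scaler0 addr0.
split; first by move=> x y [].
split; first by move=> k1 k2; rewrite /= /cmul /= uA0 vA0 h01 nmul0l !addr0.
split.
  move=> b k; exists (nmul K b.1 k + u b.2 k), (nmul K k b.1 + v b.2 k).
  by rewrite /= /cmul /= vA0 uA0 h01 h02 nmul0l nmul0r !addr0.
split; first by [].
split; first by [].
split; first by move=> a; exists (0, a).
split.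
  move=> [k a] /=; split; first by move=> ->; exists k.
  by case=> k' [].
exists (fun a => (0, a)); split; first by move=> c x y; rewrite pairZE pairDE /= scaler0 addr0.
split; first by [].
move=> a; exists (mu a); split.
  move=> k; rewrite /= /cmul /= nmul0l nmul0r uA0 vA0 h01 h02 nmul0l nmul0r.
  by rewrite !add0r !addr0.
have [k0 Hk0] := xim a; exists (- k0) => k; rewrite /= !nmulNl.
by rewrite nmulNr; have [-> ->] := Hk0 k; rewrite /= !addrK.
Qed.

End Crossed.

Lemma complement_lemma (F : fieldType) (V : lmodType F) (S : V -> Prop) :
  S 0 -> (forall (c : F) x y, S x -> S y -> S (c *: x + y)) ->
  exists q : V -> V, is_lin q /\ (forall v, S (v - q v)) /\ (forall s, S s -> q s = 0).
Proof.
move=> S0 SC.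
pose P := fun C : set V => (forall (c : F) x y, C x -> C y -> C (c *: x + y)) /\
                           (forall x, C x -> S x -> x = 0).
have [C [[CC CS] Cmax]] : exists C, P C /\ (forall B, (C `<` B)%classic -> ~ P B).
  apply: Zorn_bigcup => Fm FP Ftot; split.
  - move=> c x y [X FX Xx] [Y FY Yy].
    have [XY|YX] := Ftot _ _ FX FY.
    + exists Y => //; apply: (FP _ FY).1 => //; exact: XY.
    + exists X => //; apply: (FP _ FX).1 => //; exact: YX.
  - by move=> x [X FX Xx]; apply: (FP _ FX).2.
have C0 : C 0.
  have [[x Cx]|nC] := pselect (exists x, C x).
    by have := CC (-1) x x Cx Cx; rewrite scaleN1r addNr.
  exfalso; have := Cmax (fun x : V => x = 0) => Hm; apply: Hm.
    split; first by move=> x Cx; exfalso; apply: nC; exists x.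
    by move=> /(_ 0 erefl) /= H; apply: nC; exists 0.
  split; first by move=> c x y -> ->; rewrite scaler0 addr0.
  by move=> x ->.
have CZ : forall c x, C x -> C (c *: x) by move=> c x Cx; have := CC c x 0 Cx C0; rewrite addr0.
have SZ : forall c x, S x -> S (c *: x) by move=> c x Sx; have := SC c x 0 Sx S0; rewrite addr0.
have CD : forall x y, C x -> C y -> C (x + y) by move=> x y Cx Cy; have := CC 1 x y Cx Cy; rewrite scale1r.
have SD : forall x y, S x -> S y -> S (x + y) by move=> x y Sx Sy; have := SC 1 x y Sx Sy; rewrite scale1r.
have dec : forall v, exists p : V * V, [/\ S p.1, C p.2 & v = p.1 + p.2].
  move=> v; apply: contrapT => nex.
  pose C' := fun x : V => exists c t, C c /\ x = c + t *: v.
  apply: (Cmax C'); split.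
  - by move=> x Cx; exists x, 0; rewrite scale0r addr0.
  - move=> H; have Cv : C v by apply: H; exists 0, 1; rewrite add0r scale1r.
    by apply: nex; exists (0, v); split => //=; rewrite add0r.

  - move=> a x y [c1 [t1 [Cc1 ->]]] [c2 [t2 [Cc2 ->]]].
    exists (a *: c1 + c2), (a * t1 + t2); split; first exact: CC.
    by rewrite scalerDr scalerDl scalerA addrACA.
  - move=> x [c [t [Cc ->]]] Sx.
    have [t0|tn0] := eqVneq t 0.
      by move: Sx; rewrite t0 scale0r addr0 => Sc; rewrite (CS _ Cc Sc).
    exfalso; apply: nex; exists (t^-1 *: (c + t *: v), - t^-1 *: c); split => /=.
    + exact: SZ.
    + exact: CZ.
    + by rewrite scalerDr scalerA mulVf // scale1r scaleNr addrAC addrN add0r.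
pose pr v := sval (cid (dec v)).
have prP v : [/\ S (pr v).1, C (pr v).2 & v = (pr v).1 + (pr v).2] by rewrite /pr; case: cid.
have uniq : forall s1 c1 s2 c2, S s1 -> C c1 -> S s2 -> C c2 -> s1 + c1 = s2 + c2 -> c1 = c2.
  move=> s1 c1 s2 c2 Ss1 Cc1 Ss2 Cc2 E.
  have E' : c1 - c2 = s2 - s1.
    by apply/eqP; rewrite subr_eq addrAC -E addrC addrA addNr add0r.
  apply/eqP; rewrite -subr_eq0; apply/eqP; apply: CS.
    by have := CC (-1) c2 c1 Cc2 Cc1; rewrite scaleN1r addrC.
  by rewrite E'; have := SC (-1) s1 s2 Ss1 Ss2; rewrite scaleN1r addrC.
exists (fun v => (pr v).2); split; last split.
- move=> a x y.
  have [Sx Cx Ex] := prP x; have [Sy Cy Ey] := prP y; have [Sz Cz Ez] := prP (a *: x + y).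
  apply: (uniq _ _ _ _ Sz Cz (SC a _ _ Sx Sy) (CC a _ _ Cx Cy)).
  by rewrite -Ez {1}Ex {1}Ey scalerDr addrACA.
- move=> v; have [Sv Cv Ev] := prP v.
  by rewrite {1}Ev addrK.
- move=> s Ss; have [S1 C1 E1] := prP s.
  by symmetry; apply: (uniq s 0 (pr s).1 (pr s).2) => //; rewrite addr0.
Qed.

Lemma lin_rearr (F : fieldType) (V : lmodType F) (c : F) (X Y Z W : V) :
  c *: X + Y - (c *: Z + W) = c *: (X - Z) + (Y - W).
Proof. by rewrite scalerBr opprD addrACA. Qed.

Section Lift.
Variables (F : fieldType) (K : nalg F).

Lemma anni_closed : in_anni (K:=K) 0 /\
  (forall (c : F) x y, in_anni (K:=K) x -> in_anni y -> in_anni (c *: x + y)).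
Proof.
split; first by move=> k; rewrite nmul0l nmul0r.
move=> c x y Hx Hy k; rewrite nmulDl nmulDr nmulZl nmulZr.
by have [-> ->] := Hx k; have [-> ->] := Hy k; rewrite scaler0 addr0.
Qed.

Lemma lift_family (I : Type) (Cv : I -> mpair K) :
  (forall i, exists k, forall x, nmul K k x = (Cv i).1 x /\ nmul K x k = (Cv i).2 x) ->
  exists H : I -> K,
    (forall i x, nmul K (H i) x = (Cv i).1 x /\ nmul K x (H i) = (Cv i).2 x) /\
    (forall i j l (c : F), (forall x, (Cv i).1 x = c *: (Cv j).1 x + (Cv l).1 x /\
                                (Cv i).2 x = c *: (Cv j).2 x + (Cv l).2 x) ->
       H i = c *: H j + H l).
Proof.
move=> ex.
have [q [qL [qA q0]]] := @complement_lemma F K (@in_anni F K) anni_closed.1 anni_closed.2.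
have qe1 k x : nmul K (q k) x = nmul K k x.
  by have [E _] := qA k x; apply/eqP; rewrite eq_sym -subr_eq0 -nmulBl E.
have qe2 k x : nmul K x (q k) = nmul K x k.
  by have [_ E] := qA k x; apply/eqP; rewrite eq_sym -subr_eq0 -nmulBr E.
pose k0 i := sval (cid (ex i)).
have k0P i : forall x, nmul K (k0 i) x = (Cv i).1 x /\ nmul K x (k0 i) = (Cv i).2 x.
  by rewrite /k0; case: cid.
exists (fun i => q (k0 i)); split.
  by move=> i x; rewrite qe1 qe2; exact: k0P.
move=> i j l c E.
rewrite -(linZ qL) -(linD qL); apply/eqP; rewrite -subr_eq0 -(linB qL); apply/eqP.
apply: q0 => x; rewrite nmulBl nmulBr nmulDl nmulDr nmulZl nmulZr.
have [-> ->] := k0P i x; have [-> ->] := k0P j x; have [-> ->] := k0P l x.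
by have [-> ->] := E x; rewrite !subrr.
Qed.

End Lift.

Lemma rearr1 (V : zmodType) (P X1 X2 X3 C E : V) :
  X1 + X2 + X3 - C - E = P + X1 + (X2 + X3) - (P + C + E).
Proof. by rewrite !opprD !addrA [RHS](ACl ((1*5)*2*3*4*6*7))/= subrr add0r. Qed.

Lemma rearr2 (V : zmodType) (P X1 X2 X3 C E : V) :
  X1 + X2 + X3 - C - E = P + X2 + (X1 + X3) - (P + C + E).
Proof. by rewrite !opprD !addrA [RHS](ACl ((1*5)*3*2*4*6*7))/= subrr add0r. Qed.

Lemma d2_rearr (V : zmodType) (a a' b b' c c' d d' : V) :
  (a - a') - (b - b') + (c - c') - (d - d') = (a - b + c - d) - (a' - b' + c' - d').
Proof.
rewrite !opprB !opprD !opprK !addrA.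
by rewrite [RHS](ACl (1*6*7*2*3*8*5*4))/=.
Qed.

Section Dir2.
Variables (F : fieldType) (A K : nalg F) (xi : A -> mpair K).

Lemma curv_inner (mu : A -> mpair K) : coupling xi -> bimult_law xi mu ->
  forall a1 a2, exists k, forall x, nmul K k x = (curvature mu a1 a2).1 x /\
                                    nmul K x k = (curvature mu a1 a2).2 x.
Proof.
move=> [xib _ xim] [mub mul muxi muc] a1 a2.
have [e1 E1] := muxi a1; have [e2 E2] := muxi a2; have [e12 E12] := muxi (nmul A a1 a2).
have [c12 C12] := xim a1 a2.
have [xL1 xR1 x31 x41 x51] := xib a1; have [xL2 xR2 x32 x42 x52] := xib a2.
exists ((xi a1).1 e2 + (xi a2).2 e1 + nmul K e1 e2 - c12 - e12) => x.
rewrite /curvature /psub /pmul /=; split.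
- rewrite (E1 _).1 !(E2 _).1 (E12 _).1 (C12 _).1 /= (linD xL1) x41 nmulDr x32 nmulA.
  by rewrite !nmulBl !nmulDl; exact: rearr1.
- rewrite (E2 _).2 !(E1 _).2 (E12 _).2 (C12 _).2 /= (linD xR2) x52 nmulDl -x31 -nmulA.
  by rewrite !nmulBr !nmulDr; exact: rearr2.
Qed.

Lemma curv_lin (mu : A -> mpair K) : (forall a, is_bimult (mu a)) ->
  (forall (c : F) a b k, (mu (c *: a + b)).1 k = c *: (mu a).1 k + (mu b).1 k /\
                             (mu (c *: a + b)).2 k = c *: (mu a).2 k + (mu b).2 k) ->
  (forall (c : F) a a' b x,
    (curvature mu (c *: a + a') b).1 x = c *: (curvature mu a b).1 x + (curvature mu a' b).1 x /\
    (curvature mu (c *: a + a') b).2 x = c *: (curvature mu a b).2 x + (curvature mu a' b).2 x) /\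
  (forall (c : F) a b b' x,
    (curvature mu a (c *: b + b')).1 x = c *: (curvature mu a b).1 x + (curvature mu a b').1 x /\
    (curvature mu a (c *: b + b')).2 x = c *: (curvature mu a b).2 x + (curvature mu a b').2 x).
Proof.
move=> mub mul.
have m1 c a b k : (mu (c *: a + b)).1 k = c *: (mu a).1 k + (mu b).1 k by exact: (mul c a b k).1.
have m2 c a b k : (mu (c *: a + b)).2 k = c *: (mu a).2 k + (mu b).2 k by exact: (mul c a b k).2.
have uL a : is_lin (mu a).1 by case: (mub a).
have vL a : is_lin (mu a).2 by case: (mub a).
rewrite /curvature /psub /pmul /=; split => c a a' b x; split.
- by rewrite nmulDl nmulZl !m1 lin_rearr.
- by rewrite nmulDl nmulZl !m2 (linD (vL b)) (linZ (vL b)) lin_rearr.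
- by rewrite nmulDr nmulZr !m1 (linD (uL a)) (linZ (uL a)) lin_rearr.
- by rewrite nmulDr nmulZr !m2 lin_rearr.
Qed.

Lemma lin_sub (V W : lmodType F) (f g : V -> W) : is_lin f -> is_lin g -> is_lin (fun x => f x - g x).
Proof. by move=> Hf Hg c x y; rewrite Hf Hg lin_rearr. Qed.

Lemma dir2 : coupling xi -> (exists mu : A -> mpair K, bimult_law xi mu) ->
  obs_vanishes xi -> extendible xi.
Proof.
move=> cpl [mu bl] obs.
have [mub mul muxi muc] := bl.
have [cl1 cl2] := curv_lin mub mul.
have [H [HP Hrel]] := @lift_family F K _ (fun p : (A * A)%type => curvature mu p.1 p.2)
   (fun p => curv_inner cpl bl p.1 p.2).
pose h0 a1 a2 := H (a1, a2).
have hind : hindrance mu h0.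
  split; last by move=> a1 a2 k; exact: (HP (a1, a2) k).
  split.
  - by move=> b c a a'; apply: (Hrel (c *: a + a', b) (a, b) (a', b)) => x; exact: cl1.
  - by move=> a c b b'; apply: (Hrel (a, c *: b + b') (a, b) (a, b')) => x; exact: cl2.
have [g [gb ga gd]] := obs mu h0 bl hind.
pose h a1 a2 := h0 a1 a2 - g a1 a2.
have uL a : is_lin (mu a).1 by case: (mub a).
have vL a : is_lin (mu a).2 by case: (mub a).
apply: (@crossed_extendible F A K xi mu h) => //.
- split.
  + by move=> y; apply: lin_sub; [exact: hind.1.1 | exact: gb.1].
  + by move=> y; apply: lin_sub; [exact: hind.1.2 | exact: gb.2].
- move=> a1 a2 k; rewrite /h /= nmulBl nmulBr.
  have [-> ->] := ga a1 a2 k; rewrite !subr0; exact: (hind.2 a1 a2 k).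
- move=> a1 a2 a3; rewrite /hoch_d2 /h (linB (uL a1)) (linB (vL a3)) d2_rearr.
  by have := gd a1 a2 a3; rewrite /obs_cocycle /hoch_d2 => ->; rewrite subrr.
Qed.
End Dir2.

Lemma cancel3 (V : zmodType) (x a b : V) : x + b + a - x = a + b.
Proof. by rewrite (ACl ((1*4)*3*2))/= subrr add0r. Qed.

Lemma dH_rearr (V : zmodType) (P Q R S : V) : (P - Q) - (R - S) + (Q - S) - (P - R) = 0.
Proof.
rewrite !opprB !addrA.
by rewrite (ACl ((1*8)*(5*2)*(3*6)*(7*4)))/= !subrr !addr0.
Qed.

Section Dir1.
Variables (F : fieldType) (A K : nalg F) (xi : A -> mpair K).

Lemma dir1 : extendible xi -> obs_vanishes xi.
Proof.
move=> [B [iota [beta [iL [iinj [imul [iid [bL [bmul [bsurj [bker [gamma [gL [bg gm]]]]]]]]]]]]]].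
move=> mu h bl hind.
have [mub mul muxi muc] := bl.
have uL a : is_lin (mu a).1 by case: (mub a).
have vL a : is_lin (mu a).2 by case: (mub a).
pose m a := sval (cid (gm a)).
have mP a : (forall k, iota ((m a).1 k) = nmul B (gamma a) (iota k) /\
                       iota ((m a).2 k) = nmul B (iota k) (gamma a)) /\ out_eq (xi a) (m a).
  by rewrite /m; case: cid.
have mlin (c : F) a a' k : (m (c *: a + a')).1 k = c *: (m a).1 k + (m a').1 k /\
                          (m (c *: a + a')).2 k = c *: (m a).2 k + (m a').2 k.
  split; apply: iinj; rewrite iL.
  - by rewrite !((mP _).1 k).1 gL nmulDl nmulZl.
  - by rewrite !((mP _).1 k).2 gL nmulDr nmulZr.
pose Cv a := psub (mu a) (m a).
have Cex a : exists k, forall x, nmul K k x = (Cv a).1 x /\ nmul K x k = (Cv a).2 x.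
  have [e1 E1] := muxi a; have [e2 E2] := (mP a).2.
  exists (e1 + e2) => x; rewrite /Cv /psub /= nmulDl nmulDr.
  by have [-> ->] := E1 x; have [/= -> ->] := E2 x; rewrite /= !cancel3.
have [t [tP trel]] := lift_family Cex.
have tL : is_lin t.
  move=> c a a'; apply: trel => x; rewrite /Cv /psub /=.
  have [-> ->] := mul c a a' x; have [-> ->] := mlin c a a' x.
  by rewrite !lin_rearr.
pose T a := gamma a + iota (t a).
have TL : is_lin T.
  by move=> c a a'; rewrite /T gL tL iL scalerDr addrACA.
have uT a k : iota ((mu a).1 k) = nmul B (T a) (iota k).
  have E : (mu a).1 k = (m a).1 k + nmul K (t a) k.
    by have [-> _] := tP a k; rewrite /Cv /psub /= addrC subrK.
  by rewrite E (linD iL) ((mP a).1 k).1 imul nmulDl.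
have vT a k : iota ((mu a).2 k) = nmul B (iota k) (T a).
  have E : (mu a).2 k = (m a).2 k + nmul K k (t a).
    by have [_ ->] := tP a k; rewrite /Cv /psub /= addrC subrK.
  by rewrite E (linD iL) ((mP a).1 k).2 imul nmulDr.
have bi k : beta (iota k) = 0 by apply/bker; exists k.
have bT a : beta (T a) = a by rewrite /T (linD bL) bg bi addr0.
clearbody T.
have ex2 a1 a2 : exists k, iota k = nmul B (T a1) (T a2) - T (nmul A a1 a2).
  have /bker [k Ek] : beta (nmul B (T a1) (T a2) - T (nmul A a1 a2)) = 0.
    by rewrite (linB bL) bmul !bT subrr.
  by exists k.
pose H2 a1 a2 := sval (cid (ex2 a1 a2)).
have H2P a1 a2 : iota (H2 a1 a2) = nmul B (T a1) (T a2) - T (nmul A a1 a2).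
  by rewrite /H2; case: cid.
have H2b : is_bilin H2.
  split.
  - move=> b c a a'; apply: iinj; rewrite iL !H2P TL !nmulDl !nmulZl TL.
    by rewrite lin_rearr.
  - move=> a c b b'; apply: iinj; rewrite iL !H2P TL !nmulDr !nmulZr TL.
    by rewrite lin_rearr.
have H2e a1 a2 k : nmul K (H2 a1 a2) k = (curvature mu a1 a2).1 k /\
                   nmul K k (H2 a1 a2) = (curvature mu a1 a2).2 k.
  rewrite /curvature /psub /pmul /=; split; apply: iinj; rewrite imul H2P (linB iL).
  - by rewrite !uT nmulBl nmulA.
  - by rewrite !vT nmulBr nmulA.
have dH a1 a2 a3 : hoch_d2 mu H2 a1 a2 a3 = 0.
  apply: iinj; rewrite (lin0 iL) /hoch_d2 (linB iL) (linD iL) (linB iL) uT vT !H2P.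
  rewrite nmulBr nmulBl (nmulA (T a1)) (nmulA a1 a2 a3).
  exact: dH_rearr.
exists (fun a1 a2 => h a1 a2 - H2 a1 a2); split.
- split.
  + by move=> y; apply: lin_sub; [exact: hind.1.1 | exact: H2b.1].
  + by move=> y; apply: lin_sub; [exact: hind.1.2 | exact: H2b.2].
- move=> a1 a2 k; rewrite nmulBl nmulBr.
  have [E1 E2] := hind.2 a1 a2 k; have [F1 F2] := H2e a1 a2 k.
  by rewrite /= in E1 E2; rewrite E1 E2 F1 F2 !subrr.
- move=> a1 a2 a3; rewrite /hoch_d2 (linB (uL a1)) (linB (vL a3)) d2_rearr.
  by have := dH a1 a2 a3; rewrite /hoch_d2 => ->; rewrite subr0.
Qed.

End Dir1.

Theorem mainTheorem17 (F : fieldType) (A K : nalg F) (xi : A -> mpair K) :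
  coupling xi ->
  (exists mu : A -> mpair K, bimult_law xi mu) ->
  (extendible xi <-> obs_vanishes xi).
Proof.
move=> cpl exmu; split; first exact: dir1.
exact: dir2.
Qed.
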